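(* Let $(V,\cdot,\psi)$ be a finite-dimensional Hom-left-symmetric algebra such that $u\cdot v=\psi^2(u)\cdot v$ for all $u,v\in V$. Let $\{v_1,\dots,v_n\}$ be a basis of $V$ and $\{v^1,\dots,v^n\}$ its dual basis. Then: (a) $r_1=\sum_iv^i\wedge v_i$ and $r_2=\sum_iv^i\wedge\psi^2(v_i)$ are solutions of the classical Hom-Yang-Baxter equation in the Hom-Lie algebra $\mathfrak g(V)\ltimes_{L^\circ}V^*$. (b) If in addition the commutator Hom-Lie algebra $(\mathfrak g(V),[\cdot,\cdot]_V,\psi)$ is weakly involutive, then there are coboundary Hom-Lie bialgebra structures on $\mathfrak g(V)\ltimes_{L^\circ}V^*$ induced by $r_1$ and by $r_2$ respectively, and these two coboundary Hom-Lie bialgebra structures coincide.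
   Context: A Hom-left-symmetric algebra $(V,\cdot,\psi)$ is a vector space $V$ with a bilinear product $\cdot$ and a linear map $\psi$ with $\psi(u\cdot v)=\psi(u)\cdot\psi(v)$ and $(u\cdot v)\cdot\psi(w)-\psi(u)\cdot(v\cdot w)=(v\cdot u)\cdot\psi(w)-\psi(v)\cdot(u\cdot w)$. Its commutator Hom-Lie algebra $\mathfrak g(V)$ is $V$ with $[u,v]_V=u\cdot v-v\cdot u$ and twisting map $\psi$; $L_uv=u\cdot v$. Define $L^\circ:V\to\mathfrak{gl}(V^* )$ by $\langle L^\circ_u\xi,v\rangle=-\langle\xi,\psi(u)\cdot v\rangle$. $\mathfrak g(V)\ltimes_{L^\circ}V^*$ is $V\oplus V^*$ with bracket $[(u,\xi),(v,\eta)]=([u,v]_V,L^\circ_u\eta-L^\circ_v\xi)$ and twisting map $\psi\oplus\psi^*$. $a\wedge b=a\otimes b-b\otimes a$. A Hom-Lie algebra $(\mathfrak h,[\cdot,\cdot],\phi)$: skew-symmetric bracket, $\phi[x,y]=[\phi x,\phi y]$, $[\phi(x),[y,z]]+[\phi(y),[z,x]]+[\phi(z),[x,y]]=0$; weakly involutive if $[\phi^2(x),y]=[x,y]$. For $r=\sum_ix_i\otimes y_i$, $[r,r]=\sum_{i,j}([x_i,x_j]\otimes\phi(y_i)\otimes\phi(y_j)+\phi(x_i)\otimes[y_i,x_j]\otimes\phi(y_j)+\phi(x_i)\otimes\phi(x_j)\otimes[y_i,y_j])$; the classical Hom-Yang-Baxter equation is $[r,r]=0$. For $z\in\mathfrak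 h$, $t\in\mathfrak h\otimes\mathfrak h$: $\mathrm{ad}_zt=(\mathrm{ad}_z\otimes\phi+\phi\otimes\mathrm{ad}_z)t$. A Hom-Lie bialgebra $(\mathfrak h,\Delta)$: $\mathfrak h$ weakly involutive, $\Delta:\mathfrak h\to\mathfrak h\otimes\mathfrak h$ such that $\mathfrak h^*$ with $\langle[a,b],x\rangle=\langle\Delta(x),a\otimes b\rangle$ and $\phi^*$ is a weakly involutive Hom-Lie algebra and $\Delta[x,y]=\mathrm{ad}_{\phi(x)}\Delta(y)-\mathrm{ad}_{\phi(y)}\Delta(x)$. The coboundary structure induced by $r$ (with $(\phi\otimes\mathrm{Id})r=(\mathrm{Id}\otimes\phi)r$) is $\Delta(x)=\mathrm{ad}_xr$. *)

(* Defs.v *)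
(* A finite-dimensional K-vector space V of dimension n is
   modelled by coordinates 'rV[K]_n; V^* is modelled by 'rV[K]_n with the
   standard pairing <xi, v> = sum_k xi_k v_k. Linear maps are matrices acting
   on the right (x |-> x *m A). Tensors in h (x) h (h = K^m) are m x m
   coefficient matrices, 3-tensors are functions 'I_m -> 'I_m -> 'I_m -> K. *)
From HB Require Import structures.
From mathcomp Require Import all_boot all_order all_algebra.
Set Implicit Arguments. Unset Strict Implicit. Unset Printing Implicit Defensive.
Import Order.TTheory GRing.Theory Num.Theory.
Local Open Scope ring_scope.

Definition ev (K : fieldType) (m : nat) (i : 'I_m) : 'rV[K]_m := delta_mx 0 i.

Definition pairing (K : fieldType) (m : nat) (xi x : 'rV[K]_m) : K := (xi *m x^T) 0 0.

Definition bilinear_fun (K : fieldType) (m : nat) (f : 'rV[K]_m -> 'rV[K]_m -> 'rV[K]_m) :=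
  (forall (a : K) x y z, f (a *: x + y) z = a *: f x z + f y z) /\
  (forall (a : K) x y z, f z (a *: x + y) = a *: f z x + f z y).

Definition HomLSA (K : fieldType) (n : nat) (mul : 'rV[K]_n -> 'rV[K]_n -> 'rV[K]_n)
  (Psi : 'M[K]_n) :=
  [/\ bilinear_fun mul,
      (forall u v, mul u v *m Psi = mul (u *m Psi) (v *m Psi)) &
      (forall u v w, mul (mul u v) (w *m Psi) - mul (u *m Psi) (mul v w)
                   = mul (mul v u) (w *m Psi) - mul (v *m Psi) (mul u w))].

Definition commbr (K : fieldType) (n : nat) (mul : 'rV[K]_n -> 'rV[K]_n -> 'rV[K]_n)
  (u v : 'rV[K]_n) : 'rV[K]_n := mul u v - mul v u.

Definition Lo (K : fieldType) (n : nat) (mul : 'rV[K]_n -> 'rV[K]_n -> 'rV[K]_n)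
  (Psi : 'M[K]_n) (u xi : 'rV[K]_n) : 'rV[K]_n :=
  \row_j (- pairing xi (mul (u *m Psi) (ev K j))).

(* g(V) |x_{L^o} V^* : elements of V (+) V^* are row_mx u xi *)
Definition semi_br (K : fieldType) (n : nat) (mul : 'rV[K]_n -> 'rV[K]_n -> 'rV[K]_n)
  (Psi : 'M[K]_n) (x y : 'rV[K]_(n + n)) : 'rV[K]_(n + n) :=
  row_mx (commbr mul (lsubmx x) (lsubmx y))
         (Lo mul Psi (lsubmx x) (rsubmx y) - Lo mul Psi (lsubmx y) (rsubmx x)).

(* twisting map psi (+) psi^* ; psi^* xi = xi o psi, i.e. xi *m Psi^T *)
Definition semi_Phi (K : fieldType) (n : nat) (Psi : 'M[K]_n) : 'M[K]_(n + n) :=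
  block_mx Psi 0 0 Psi^T.

Definition inV (K : fieldType) (n : nat) (u : 'rV[K]_n) : 'rV[K]_(n + n) := row_mx u 0.
Definition inVd (K : fieldType) (n : nat) (xi : 'rV[K]_n) : 'rV[K]_(n + n) := row_mx 0 xi.

Definition is_HomLie (K : fieldType) (m : nat) (br : 'rV[K]_m -> 'rV[K]_m -> 'rV[K]_m)
  (Phi : 'M[K]_m) :=
  [/\ bilinear_fun br,
      (forall x y, br x y = - br y x),
      (forall x y, br x y *m Phi = br (x *m Phi) (y *m Phi)) &
      (forall x y z, br (x *m Phi) (br y z) + br (y *m Phi) (br z x)
                     + br (z *m Phi) (br x y) = 0)].

Definition weakly_involutive (K : fieldType) (m : nat)
  (br : 'rV[K]_m -> 'rV[K]_m -> 'rV[K]_m) (Phi : 'M[K]_m) :=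
  forall x y, br (x *m Phi *m Phi) y = br x y.

Definition tens (K : fieldType) (m : nat) (x y : 'rV[K]_m) : 'M[K]_m := x^T *m y.
Definition wedge (K : fieldType) (m : nat) (x y : 'rV[K]_m) : 'M[K]_m := tens x y - tens y x.

Definition tapp (K : fieldType) (m : nat) (f g : 'rV[K]_m -> 'rV[K]_m) (T : 'M[K]_m)
  : 'M[K]_m := \sum_i \sum_j T i j *: tens (f (ev K i)) (g (ev K j)).

Definition triple (K : fieldType) (m : nat) (a b c : 'rV[K]_m) (p q s : 'I_m) : K :=
  a 0 p * b 0 q * c 0 s.

(* [r,r] for r written as r = sum_i e_i (x) (row i r) *)
Definition hybr (K : fieldType) (m : nat) (br : 'rV[K]_m -> 'rV[K]_m -> 'rV[K]_m)
  (Phi : 'M[K]_m) (r : 'M[K]_m) (p q s : 'I_m) : K :=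
  \sum_i \sum_j
    (triple (br (ev K i) (ev K j)) (row i r *m Phi) (row j r *m Phi) p q s
   + triple (ev K i *m Phi) (br (row i r) (ev K j)) (row j r *m Phi) p q s
   + triple (ev K i *m Phi) (ev K j *m Phi) (br (row i r) (row j r)) p q s).

Definition CHYBE (K : fieldType) (m : nat) (br : 'rV[K]_m -> 'rV[K]_m -> 'rV[K]_m)
  (Phi : 'M[K]_m) (r : 'M[K]_m) := forall p q s, hybr br Phi r p q s = 0.

Definition adT (K : fieldType) (m : nat) (br : 'rV[K]_m -> 'rV[K]_m -> 'rV[K]_m)
  (Phi : 'M[K]_m) (z : 'rV[K]_m) (t : 'M[K]_m) : 'M[K]_m :=
  tapp (br z) (fun w => w *m Phi) t + tapp (fun w => w *m Phi) (br z) t.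

(* bracket on h^* : <[a,b], x> = <Delta x, a (x) b> *)
Definition dual_br (K : fieldType) (m : nat) (Delta : 'rV[K]_m -> 'M[K]_m)
  (a b : 'rV[K]_m) : 'rV[K]_m :=
  \row_k ((a *m Delta (ev K k) *m b^T) 0 0).

Definition HomLieBialg (K : fieldType) (m : nat) (br : 'rV[K]_m -> 'rV[K]_m -> 'rV[K]_m)
  (Phi : 'M[K]_m) (Delta : 'rV[K]_m -> 'M[K]_m) :=
  [/\ is_HomLie br Phi /\ weakly_involutive br Phi,
      (forall (a : K) x y, Delta (a *: x + y) = a *: Delta x + Delta y),
      is_HomLie (dual_br Delta) Phi^T, weakly_involutive (dual_br Delta) Phi^T &
      (forall x y, Delta (br x y)
                   = adT br Phi (x *m Phi) (Delta y) - adT br Phi (y *m Phi) (Delta x))].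

Definition phi_sym (K : fieldType) (m : nat) (Phi : 'M[K]_m) (r : 'M[K]_m) :=
  tapp (fun w => w *m Phi) id r = tapp id (fun w => w *m Phi) r.

Definition coboundary_bialg (K : fieldType) (m : nat)
  (br : 'rV[K]_m -> 'rV[K]_m -> 'rV[K]_m) (Phi : 'M[K]_m) (r : 'M[K]_m) :=
  phi_sym Phi r /\ HomLieBialg br Phi (fun x => adT br Phi x r).

Definition is_basis (K : fieldType) (n : nat) (v : 'I_n -> 'rV[K]_n) :=
  (\matrix_i v i) \in unitmx.

Definition is_dual_basis (K : fieldType) (n : nat) (v vd : 'I_n -> 'rV[K]_n) :=
  forall i j, pairing (vd i) (v j) = (i == j)%:R.

(* Main.v *)
Require Import Defs.
From HB Require Import structures.
From mathcomp Require Import all_boot all_order all_algebra ring.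
From Stdlib Require Import FunctionalExtensionality.
Set Implicit Arguments. Unset Strict Implicit. Unset Printing Implicit Defensive.
Import Order.TTheory GRing.Theory Num.Theory.
Local Open Scope ring_scope.

Section Gen.
Variables (K : fieldType) (m : nat).
Implicit Types (xi x y z a b : 'rV[K]_m) (f : 'rV[K]_m -> 'rV[K]_m).
Implicit Types (T Phi r : 'M[K]_m).

Definition islin f := forall (c : K) x y, f (c *: x + y) = c *: f x + f y.

Lemma lin0 f : islin f -> f 0 = 0.
Proof. move=> H; have := H 1 0 0; rewrite !scale1r addr0 => /(congr1 (fun t => t - f 0)). by rewrite subrr addrK => /esym. Qed.

Lemma linD f : islin f -> forall x y, f (x + y) = f x + f y.
Proof. by move=> H x y; have := H 1 x y; rewrite !scale1r. Qed.
Lemma linZ f : islin f -> forall c x, f (c *: x) = c *: f x.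
Proof. by move=> H c x; rewrite -[c *: x]addr0 H lin0 // addr0. Qed.
Lemma linN f : islin f -> forall x, f (- x) = - f x.
Proof. by move=> H x; rewrite -scaleN1r linZ // scaleN1r. Qed.
Lemma linB f : islin f -> forall x y, f (x - y) = f x - f y.
Proof. by move=> H x y; rewrite linD // linN. Qed.

Lemma lin_sum f (c : 'I_m -> K) (X : 'I_m -> 'rV[K]_m) : islin f ->
  f (\sum_i c i *: X i) = \sum_i c i *: f (X i).
Proof.
move=> H; apply: (big_rec2 (fun u w => f u = w)); first exact: lin0.
by move=> i u w _ <-; rewrite H.
Qed.

Lemma lin_expand f x : islin f -> f x = \sum_j x 0 j *: f (ev K j).
Proof. by move=> H; rewrite {1}[x]row_sum_delta lin_sum. Qed.

Lemma pairingE xi x : pairing xi x = \sum_k xi 0 k * x 0 k.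
Proof. by rewrite /pairing !mxE; apply: eq_bigr => k _; rewrite mxE. Qed.

Lemma pairing_sym xi x : pairing xi x = pairing x xi.
Proof. by rewrite !pairingE; apply: eq_bigr => k _; rewrite mulrC. Qed.

Lemma pairingDr xi x y : pairing xi (x + y) = pairing xi x + pairing xi y.
Proof. by rewrite !pairingE -big_split; apply: eq_bigr => k _; rewrite mxE mulrDr. Qed.
Lemma pairingZr xi c x : pairing xi (c *: x) = c * pairing xi x.
Proof. by rewrite !pairingE mulr_sumr; apply: eq_bigr => k _; rewrite mxE mulrCA. Qed.
Lemma pairingNr xi x : pairing xi (- x) = - pairing xi x.
Proof. by rewrite -scaleN1r pairingZr mulN1r. Qed.
Lemma pairingBr xi x y : pairing xi (x - y) = pairing xi x - pairing xi y.
Proof. by rewrite pairingDr pairingNr. Qed.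
Lemma pairing0r xi : pairing xi 0 = 0.
Proof. by rewrite pairingE big1 // => k _; rewrite mxE mulr0. Qed.
Lemma pairing0l xi : pairing 0 xi = 0.
Proof. by rewrite pairing_sym pairing0r. Qed.
Lemma pairingDl xi x y : pairing (x + y) xi = pairing x xi + pairing y xi.
Proof. by rewrite !(pairing_sym _ xi) pairingDr. Qed.
Lemma pairingZl xi c x : pairing (c *: x) xi = c * pairing x xi.
Proof. by rewrite !(pairing_sym _ xi) pairingZr. Qed.
Lemma pairingNl xi x : pairing (- x) xi = - pairing x xi.
Proof. by rewrite !(pairing_sym _ xi) pairingNr. Qed.
Lemma pairingBl xi x y : pairing (x - y) xi = pairing x xi - pairing y xi.
Proof. by rewrite !(pairing_sym _ xi) pairingBr. Qed.

Lemma pairing_evl j x : pairing (ev K j) x = x 0 j.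
Proof.
rewrite pairingE (bigD1 j) //= big1 ?addr0 => [|k kj]; first by rewrite mxE !eqxx mul1r.
by rewrite mxE (negbTE kj) andbF mul0r.
Qed.
Lemma pairing_evr j x : pairing x (ev K j) = x 0 j.
Proof. by rewrite pairing_sym pairing_evl. Qed.

Lemma pairing_mx xi x (A : 'M[K]_m) : pairing xi (x *m A) = pairing (xi *m A^T) x.
Proof. by rewrite /pairing trmx_mul mulmxA. Qed.
Lemma pairing_trl xi x (A : 'M[K]_m) : pairing (xi *m A^T) x = pairing xi (x *m A).
Proof. by rewrite pairing_mx. Qed.

Lemma pairing_eq a b : (forall z, pairing a z = pairing b z) -> a = b.
Proof. by move=> H; apply/rowP => j; rewrite -!pairing_evr; apply: H. Qed.

Lemma pairing_mxl xi x (A : 'M[K]_m) : pairing (xi *m A) x = pairing xi (x *m A^T).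
Proof. by rewrite pairing_mx trmxK. Qed.

Lemma pairing_sumr xi (c : 'I_m -> K) (X : 'I_m -> 'rV[K]_m) :
  pairing xi (\sum_k c k *: X k) = \sum_k c k * pairing xi (X k).
Proof.
apply: (big_rec2 (fun u w => pairing xi u = w)); first exact: pairing0r.
by move=> i u w _ <-; rewrite pairingDr pairingZr.
Qed.

Lemma mx_ext (A B : 'M[K]_m) : (forall w : 'rV[K]_m, w *m A = w *m B) -> A = B.
Proof. by move=> H; apply/row_matrixP => i; rewrite !rowE. Qed.

Lemma zmodE1 (V : zmodType) (p1 q1 p2 q2 c : V) :
  (p1 + q1 + c) - (p2 + q2 + c) = (p1 - p2) + (q1 - q2).
Proof. by rewrite (addrC (p2 + q2) c) addrKA opprD addrACA. Qed.

Section Br.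
Variable br : 'rV[K]_m -> 'rV[K]_m -> 'rV[K]_m.
Hypothesis Hb : bilinear_fun br.

Lemma bilL z : islin (fun x => br x z).
Proof. by move=> c x y; case: Hb => H _; apply: H. Qed.
Lemma bilR z : islin (br z).
Proof. by move=> c x y; case: Hb => _ H; apply: H. Qed.

Definition Bm z : 'M[K]_m := \matrix_i br z (ev K i).
Lemma BmE z y : y *m Bm z = br z y.
Proof.
rewrite mulmx_sum_row [RHS](lin_expand _ (bilR z)); apply: eq_bigr => i _.
by rewrite rowK.
Qed.

Lemma bil_sum2 (c d : 'I_m -> K) (X Y : 'I_m -> 'rV[K]_m) :
  br (\sum_i c i *: X i) (\sum_j d j *: Y j) = \sum_i \sum_j (c i * d j) *: br (X i) (Y j).
Proof.
rewrite (lin_sum _ _ (bilL _)); apply: eq_bigr => i _.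
rewrite (lin_sum _ _ (bilR _)) scaler_sumr; apply: eq_bigr => j _.
by rewrite scalerA.
Qed.
End Br.

Lemma tappE f g (F G : 'M[K]_m) T :
  (forall i, f (ev K i) = ev K i *m F) -> (forall j, g (ev K j) = ev K j *m G) ->
  tapp f g T = F^T *m T *m G.
Proof.
move=> Hf Hg; rewrite /tapp; symmetry.
rewrite {1}[T]matrix_sum_delta mulmx_sumr mulmx_suml; apply: eq_bigr => i _.
rewrite mulmx_sumr mulmx_suml; apply: eq_bigr => j _.
rewrite Hf Hg /tens trmx_mul -scalemxAr -scalemxAl; congr (_ *: _).
by rewrite -(mul_delta_mx (0 : 'I_1)) -trmx_delta !mulmxA.
Qed.

Lemma adTE br Phi z T : bilinear_fun br ->
  adT br Phi z T = (Bm br z)^T *m T *m Phi + Phi^T *m T *m Bm br z.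
Proof.
move=> Hb; rewrite /adT; congr (_ + _); apply: tappE => // i; by rewrite BmE.
Qed.

Lemma phi_symE Phi r : Phi^T *m r = r *m Phi -> phi_sym Phi r.
Proof.
move=> H; rewrite /phi_sym (@tappE _ _ Phi 1%:M) //; last by move=> j; rewrite mulmx1.
rewrite (@tappE _ _ 1%:M Phi) //; last by move=> j; rewrite mulmx1.
by rewrite mulmx1 H trmx1 mul1mx.
Qed.
End Gen.

Lemma mxZl (K : fieldType) p1 p2 p3 (c : K) (A : 'M[K]_(p1,p2)) (B : 'M[K]_(p2,p3)) :
  (c *: A) *m B = c *: (A *m B).
Proof. by rewrite scalemxAl. Qed.

Section Gen2.
Variables (K : fieldType) (m : nat).
Implicit Types (xi x y z a b : 'rV[K]_m) (f : 'rV[K]_m -> 'rV[K]_m).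
Implicit Types (T Phi r : 'M[K]_m).
Variable br : 'rV[K]_m -> 'rV[K]_m -> 'rV[K]_m.
Hypothesis Hb : bilinear_fun br.

Lemma entZ p1 p2 (c : K) (A : 'M[K]_(p1,p2)) i j : (c *: A) i j = c * A i j.
Proof. by rewrite mxE. Qed.
Lemma ent_rowmul (A B : 'M[K]_m) i j : (row i A *m B) 0 j = (A *m B) i j.
Proof. by rewrite -row_mul mxE. Qed.
Lemma ent_ev (A : 'M[K]_m) i j : (ev K i *m A) 0 j = A i j.
Proof. by rewrite -rowE mxE. Qed.

Lemma hybrE Phi r p q s :
  hybr br Phi r p q s =
    br (ev K q *m (r *m Phi)^T) (ev K s *m (r *m Phi)^T) 0 p
  + br (ev K p *m Phi^T *m r) (ev K s *m (r *m Phi)^T) 0 q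
  + br (ev K p *m Phi^T *m r) (ev K q *m Phi^T *m r) 0 s.
Proof.
have cE k : ev K k *m (r *m Phi)^T = \sum_j (r *m Phi) j k *: ev K j.
  rewrite {1}[ev K k *m _]row_sum_delta; apply: eq_bigr => j _.
  by rewrite -rowE !mxE.
have dE k : ev K k *m Phi^T *m r = \sum_i Phi i k *: row i r.
  rewrite mulmx_sum_row; apply: eq_bigr => i _; by rewrite -rowE !mxE.
rewrite /hybr; under eq_bigr do rewrite !big_split /=.
rewrite !big_split /= !cE !dE !(bil_sum2 Hb) !summxE.
congr (_ + _ + _); apply: eq_bigr => i _; rewrite summxE; apply: eq_bigr => j _;
  rewrite /triple entZ ?ent_rowmul ?ent_ev; ring.
Qed.

Lemma adT_pair Phi r x a b : r^T = - r ->
  (a *m adT br Phi x r *m b^T) 0 0 =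
  pairing b (br x (a *m Phi^T *m r)) - pairing a (br x (b *m Phi^T *m r)).
Proof.
move=> Hr; rewrite (adTE _ _ _ Hb).
rewrite -/(pairing (a *m _) b) mulmxDr pairingDl addrC; congr (_ + _).
  by rewrite !mulmxA pairing_sym -(BmE Hb).
rewrite !mulmxA pairing_mxl pairing_mxl Hr mulmxN pairingNr; congr (- _).
by rewrite pairing_mxl trmxK (BmE Hb).
Qed.

Lemma dual_pair Phi r a b z : r^T = - r ->
  pairing (dual_br (fun x => adT br Phi x r) a b) z =
  pairing b (br z (a *m Phi^T *m r)) - pairing a (br z (b *m Phi^T *m r)).
Proof.
move=> Hr; rewrite pairingE.
rewrite [in RHS](lin_expand z (bilL Hb _)) [in RHS](lin_expand z (bilL Hb _)).
rewrite !pairing_sumr -sumrB; apply: eq_bigr => k _.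
by rewrite mxE adT_pair // mulrC mulrBr.
Qed.

Lemma BmM Phi x : is_HomLie br Phi -> Bm br x *m Phi = Phi *m Bm br (x *m Phi).
Proof.
case=> _ _ HM _; apply: mx_ext => w; rewrite !mulmxA !(BmE Hb); exact: HM.
Qed.

Lemma BmJ Phi x y : is_HomLie br Phi ->
  Bm br y *m Bm br (x *m Phi) - Bm br x *m Bm br (y *m Phi) = Phi *m Bm br (br x y).
Proof.
case=> _ Hs _ HJ; apply: mx_ext => w.
rewrite mulmxBr !mulmxA !(BmE Hb).
rewrite (Hs x w) (linN (bilR Hb _)) opprK (Hs (br x y)).
apply/eqP; rewrite -addr_eq0; apply/eqP; exact: HJ.
Qed.

Lemma BmW Phi x : is_HomLie br Phi -> weakly_involutive br Phi ->
  Phi *m Phi *m Bm br x = Bm br x.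
Proof.
case=> _ Hs _ _ HW; apply: mx_ext => w.
by rewrite !mulmxA !(BmE Hb) Hs HW -Hs.
Qed.

Lemma cocycle Phi r : is_HomLie br Phi -> weakly_involutive br Phi ->
  Phi^T *m r = r *m Phi -> forall x y,
  adT br Phi (br x y) r = adT br Phi (x *m Phi) (adT br Phi y r)
                        - adT br Phi (y *m Phi) (adT br Phi x r).
Proof.
move=> HL HW HS x y.
have L1 u v : adT br Phi (u *m Phi) (adT br Phi v r) =
   (Bm br v *m Bm br (u *m Phi))^T *m r *m (Phi *m Phi)
 + (Phi *m Phi)^T *m r *m (Bm br v *m Bm br (u *m Phi))
 + (Phi^T *m (Bm br u)^T *m r *m Bm br v *m Phi + Phi^T *m (Bm br v)^T *m r *m Bm br u *m Phi).
  rewrite !(adTE _ _ _ Hb) !mulmxDr !mulmxDl !trmx_mul !mulmxA.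
  have e1 : (Bm br (u *m Phi))^T *m Phi^T = Phi^T *m (Bm br u)^T.
    by rewrite -trmx_mul -BmM // trmx_mul.
  have e2 : Phi *m Bm br (u *m Phi) = Bm br u *m Phi by rewrite BmM.
  rewrite e1 -[Phi^T *m (Bm br v)^T *m r *m Phi *m Bm br (u *m Phi)]mulmxA e2 !mulmxA.
  by rewrite -!addrA; congr (_ + _); rewrite [RHS]addrC -addrA.
rewrite !L1 (addrC (Phi^T *m (Bm br y)^T *m _ *m _ *m _)) zmodE1.
rewrite -!mulmxBl -mulmxBr -linearB /= BmJ //.
set B := Bm br (br x y).
rewrite (adTE _ _ _ Hb) trmx_mul; congr (_ + _).
  have -> : B^T *m Phi^T *m r *m (Phi *m Phi) = (Phi *m Phi *m B)^T *m r *m Phi.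
    by rewrite !trmx_mul !mulmxA -(mulmxA _ r Phi) -HS !mulmxA.
  by rewrite BmW.
have -> : (Phi *m Phi)^T *m r *m (Phi *m B) = Phi^T *m r *m (Phi *m Phi *m B).
  by rewrite trmx_mul !mulmxA -[in LHS](mulmxA Phi^T Phi^T r) [in LHS]HS !mulmxA.
by rewrite BmW.
Qed.

Lemma chybe_of Phi r : r^T = - r ->
  (forall a b c, pairing a (br (b *m Phi^T *m r) (c *m Phi^T *m r))
               - pairing b (br (a *m Phi^T *m r) (c *m Phi^T *m r))
               + pairing c (br (a *m Phi^T *m r) (b *m Phi^T *m r)) = 0) ->
  CHYBE br Phi r.
Proof.
move=> Hr HJ p q s; rewrite hybrE.
have cE k : ev K k *m (r *m Phi)^T = - (ev K k *m Phi^T *m r).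
  by rewrite trmx_mul Hr !mulmxN mulmxA.
rewrite !cE (linN (bilL Hb _)) (linN (bilR Hb _)) opprK (linN (bilR Hb _)).
rewrite -!pairing_evl.
by rewrite pairingNr; apply: HJ.
Qed.

Lemma Bm_lin (c : K) x y : Bm br (c *: x + y) = c *: Bm br x + Bm br y.
Proof.
apply: mx_ext => w; rewrite mulmxDr -scalemxAr !(BmE Hb).
exact: (bilL Hb w).
Qed.

Lemma adT_lin Phi r (c : K) x y :
  adT br Phi (c *: x + y) r = c *: adT br Phi x r + adT br Phi y r.
Proof.
rewrite !(adTE _ _ _ Hb) Bm_lin linearD linearZ /= !mulmxDl !mulmxDr.
rewrite -!scalemxAl -!scalemxAr scalerDr addrACA.
by [].
Qed.

Lemma adT_twist Phi r x : is_HomLie br Phi -> weakly_involutive br Phi ->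
  Phi^T *m r = r *m Phi -> adT br Phi x (r *m Phi *m Phi) = adT br Phi x r.
Proof.
move=> HL HW HS; rewrite !(adTE _ _ _ Hb); congr (_ + _).
  have -> : r *m Phi *m Phi = Phi^T *m Phi^T *m r.
    by rewrite -HS -mulmxA -HS mulmxA.
  by rewrite !mulmxA -trmx_mul -trmx_mul mulmxA BmW.
by rewrite -!mulmxA (mulmxA Phi) BmW.
Qed.

Lemma sym_twist Phi r : Phi^T *m r = r *m Phi ->
  Phi^T *m (r *m Phi *m Phi) = (r *m Phi *m Phi) *m Phi.
Proof. by move=> HS; rewrite !mulmxA HS. Qed.
End Gen2.

Section Transport.
Variables (K : fieldType) (m : nat).
Variables (br : 'rV[K]_m -> 'rV[K]_m -> 'rV[K]_m) (Phi Phi' : 'M[K]_m)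
  (sw : 'rV[K]_m -> 'rV[K]_m).
Hypotheses (Hsl : islin sw) (swK : forall x, sw (sw x) = x)
  (swP : forall x, sw (x *m Phi') = sw x *m Phi).

Lemma swP' x : sw x *m Phi' = sw (x *m Phi).
Proof. by rewrite -{1}(swK (sw x *m Phi')) swP swK. Qed.

Lemma transport_HomLie : is_HomLie br Phi ->
  is_HomLie (fun a b => sw (br (sw a) (sw b))) Phi'.
Proof.
case=> [[HL HR] Hs HM HJ]; split.
- split=> c x y z /=; by rewrite Hsl HL Hsl || by rewrite Hsl HR Hsl.
- by move=> x y /=; rewrite Hs (linN Hsl).
- by move=> x y /=; rewrite swP' HM !swP.
- move=> x y z /=; rewrite !swK !swP -!(linD Hsl) HJ; exact: lin0.
Qed.

Lemma transport_WI : weakly_involutive br Phi ->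
  weakly_involutive (fun a b => sw (br (sw a) (sw b))) Phi'.
Proof. by move=> HW x y /=; rewrite !swP HW. Qed.
End Transport.

Lemma splitv (K : fieldType) n (x : 'rV[K]_(n + n)) : exists u xi, x = row_mx u xi.
Proof. by exists (lsubmx x), (rsubmx x); rewrite hsubmxK. Qed.

Lemma pairing_row (K : fieldType) n (a b c d : 'rV[K]_n) :
  pairing (row_mx a b) (row_mx c d) = pairing a c + pairing b d.
Proof. by rewrite /pairing tr_row_mx mul_row_col mxE. Qed.

Lemma pairing_eq' (K : fieldType) m (a b : 'rV[K]_m) :
  (forall z, pairing z a = pairing z b) -> a = b.
Proof. by move=> H; apply: pairing_eq => z; rewrite !(pairing_sym _ z). Qed.

Lemma comb3 (K : fieldType) (a1 b1 a2 b2 a3 b3 L R c1 c2 c3 : K) :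
  a1 = b1 -> a2 = b2 -> a3 = b3 ->
  L - R = c1 * (a1 - b1) + c2 * (a2 - b2) + c3 * (a3 - b3) -> L = R.
Proof.
move=> -> -> ->; rewrite !subrr !mulr0 !addr0 => /eqP; by rewrite subr_eq0 => /eqP.
Qed.

Lemma comb6 (K : fieldType) (c1 c2 c3 c4 c5 c6 a1 b1 a2 b2 a3 b3 a4 b4 a5 b5 a6 b6 L R : K) :
  a1 = b1 -> a2 = b2 -> a3 = b3 -> a4 = b4 -> a5 = b5 -> a6 = b6 ->
  L - R = c1 * (a1 - b1) + c2 * (a2 - b2) + c3 * (a3 - b3)
        + c4 * (a4 - b4) + c5 * (a5 - b5) + c6 * (a6 - b6) -> L = R.
Proof.
move=> -> -> -> -> -> ->; rewrite !subrr !mulr0 !addr0 => /eqP; by rewrite subr_eq0 => /eqP.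
Qed.

Section LSA.
Variables (K : fieldType) (n : nat) (mul : 'rV[K]_n -> 'rV[K]_n -> 'rV[K]_n)
  (Psi : 'M[K]_n).
Hypothesis HL : HomLSA mul Psi.
Hypothesis H2 : forall x y, mul x y = mul (x *m Psi *m Psi) y.
Implicit Types (u v w t xi eta zeta x y : 'rV[K]_n).

Lemma mulL z : islin (fun x => mul x z).
Proof. by case: HL => [[H _] _ _]. Qed.
Lemma mulR z : islin (mul z).
Proof. by case: HL => [[_ H] _ _]. Qed.
Lemma mulPsi u v : mul u v *m Psi = mul (u *m Psi) (v *m Psi).
Proof. by case: HL. Qed.
Lemma LSA u v w : mul (mul u v) (w *m Psi) - mul (u *m Psi) (mul v w)
                = mul (mul v u) (w *m Psi) - mul (v *m Psi) (mul u w).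
Proof. by case: HL => _ _; apply. Qed.
Lemma H2' x y : mul (x *m Psi *m Psi) y = mul x y.
Proof. by rewrite -H2. Qed.

Lemma mDl x y z : mul (x + y) z = mul x z + mul y z. Proof. exact: (linD (mulL z) x). Qed.
Lemma mBl x y z : mul (x - y) z = mul x z - mul y z. Proof. exact: (linB (mulL z) x). Qed.
Lemma mNl x z : mul (- x) z = - mul x z. Proof. exact: (linN (mulL z) x). Qed.
Lemma mZl c x z : mul (c *: x) z = c *: mul x z. Proof. exact: (linZ (mulL z) c x). Qed.
Lemma m0l z : mul 0 z = 0. Proof. exact: (lin0 (mulL z)). Qed.
Lemma mDr x y z : mul z (x + y) = mul z x + mul z y. Proof. exact: (linD (mulR z) x). Qed.
Lemma mBr x y z : mul z (x - y) = mul z x - mul z y. Proof. exact: (linB (mulR z) x). Qed.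
Lemma mNr x z : mul z (- x) = - mul z x. Proof. exact: (linN (mulR z) x). Qed.
Lemma mZr c x z : mul z (c *: x) = c *: mul z x. Proof. exact: (linZ (mulR z) c x). Qed.
Lemma m0r z : mul z 0 = 0. Proof. exact: lin0 (mulR z). Qed.

Lemma Lo_pair u xi t : pairing (Lo mul Psi u xi) t = - pairing xi (mul (u *m Psi) t).
Proof.
rewrite pairingE [in RHS](lin_expand t (mulR _)) pairing_sumr -sumrN.
by apply: eq_bigr => j _; rewrite mxE mulNr mulrC.
Qed.
Lemma Lo_pair_r u xi t : pairing t (Lo mul Psi u xi) = - pairing xi (mul (u *m Psi) t).
Proof. by rewrite pairing_sym Lo_pair. Qed.
Lemma PT1 xi y : pairing (xi *m Psi^T) y = pairing xi (y *m Psi).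
Proof. exact: pairing_trl. Qed.
Lemma PT2 xi y : pairing y (xi *m Psi^T) = pairing xi (y *m Psi).
Proof. by rewrite pairing_sym PT1. Qed.

Lemma semi_br_row u xi v eta :
  semi_br mul Psi (row_mx u xi) (row_mx v eta)
  = row_mx (commbr mul u v) (Lo mul Psi u eta - Lo mul Psi v xi).
Proof. by rewrite /semi_br !row_mxKl !row_mxKr. Qed.

Lemma Phi_row u xi : row_mx u xi *m semi_Phi Psi = row_mx (u *m Psi) (xi *m Psi^T).
Proof. by rewrite /semi_Phi mul_row_block !mulmx0 addr0 add0r. Qed.

Lemma H2r (HW : weakly_involutive (commbr mul) Psi) x y :
  mul x (y *m Psi *m Psi) = mul x y.
Proof.
by have := HW y x; rewrite /commbr H2' => /addrI /oppr_inj.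
Qed.
End LSA.

Ltac pexp mul Psi HL H2 :=
  rewrite ?(H2' H2, mulPsi HL, mulmxDl, mxZl, mulmxBl, mulmxN, mulNmx, mul0mx,
            mDl HL, mBl HL, mNl HL, mZl HL, m0l HL,
            mDr HL, mBr HL, mNr HL, mZr HL, m0r HL,
            pairingDr, pairingBr, pairingNr, pairingZr, pairing0r,
            pairingDl, pairingBl, pairingNl, pairingZl, pairing0l,
            Lo_pair HL, Lo_pair_r HL, PT1 Psi, PT2 Psi).

Ltac pexpW mul Psi HL H2 HW :=
  rewrite ?(H2' H2, H2r H2 HW, mulPsi HL, mulmxDl, mxZl, mulmxBl, mulmxN, mulNmx, mul0mx,
            mDl HL, mBl HL, mNl HL, mZl HL, m0l HL,
            mDr HL, mBr HL, mNr HL, mZr HL, m0r HL,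
            pairingDr, pairingBr, pairingNr, pairingZr, pairing0r,
            pairingDl, pairingBl, pairingNl, pairingZl, pairing0l,
            Lo_pair HL, Lo_pair_r HL, PT1 Psi, PT2 Psi).

Section Semi.
Variables (K : fieldType) (n : nat) (mul : 'rV[K]_n -> 'rV[K]_n -> 'rV[K]_n)
  (Psi : 'M[K]_n).
Hypothesis HL : HomLSA mul Psi.
Hypothesis H2 : forall x y, mul x y = mul (x *m Psi *m Psi) y.

Ltac ptest := apply: pairing_eq'; intro;
  lazymatch goal with |- pairing ?t _ = _ => case: (splitv t) => t1 [t2 ->] end;
  rewrite !pairing_row /commbr; pexp mul Psi HL H2.

Lemma semi_bil : bilinear_fun (semi_br mul Psi).
Proof.
split=> c x y z; case: (splitv x) => u1 [x1 ->]; case: (splitv y) => u2 [x2 ->];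
  case: (splitv z) => u3 [x3 ->];
  rewrite scale_row_mx add_row_mx !(semi_br_row mul Psi) scale_row_mx add_row_mx;
  ptest; ring.
Qed.



Lemma semi_skew x y : semi_br mul Psi x y = - semi_br mul Psi y x.
Proof.
case: (splitv x) => u1 [x1 ->]; case: (splitv y) => u2 [x2 ->].
rewrite !(semi_br_row mul Psi) opp_row_mx; ptest; ring.
Qed.

Lemma semi_mult x y : semi_br mul Psi x y *m semi_Phi Psi
  = semi_br mul Psi (x *m semi_Phi Psi) (y *m semi_Phi Psi).
Proof.
case: (splitv x) => u1 [x1 ->]; case: (splitv y) => u2 [x2 ->].
rewrite !(semi_br_row mul Psi) !(Phi_row Psi) !(semi_br_row mul Psi); ptest; ring.
Qed.

Lemma semi_jac x y z :
  semi_br mul Psi (x *m semi_Phi Psi) (semi_br mul Psi y z)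
+ semi_br mul Psi (y *m semi_Phi Psi) (semi_br mul Psi z x)
+ semi_br mul Psi (z *m semi_Phi Psi) (semi_br mul Psi x y) = 0.
Proof.
case: (splitv x) => u [xi ->]; case: (splitv y) => v [eta ->];
case: (splitv z) => w [zeta ->].
rewrite !(Phi_row Psi) !(semi_br_row mul Psi) !add_row_mx.
ptest.
have h1 := congr1 (pairing t1) (LSA HL v w u).
have h2 := congr1 (pairing t1) (LSA HL w u v).
have h3 := congr1 (pairing t1) (LSA HL u v w).
have h4 := congr1 (pairing xi) (LSA HL v w t2).
have h5 := congr1 (pairing eta) (LSA HL w u t2).
have h6 := congr1 (pairing zeta) (LSA HL u v t2).
move: h1 h2 h3 h4 h5 h6; pexp mul Psi HL H2 => h1 h2 h3 h4 h5 h6.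
eapply (@comb6 _ (-1) (-1) (-1) 1 1 1); [exact: h1|exact: h2|exact: h3|exact: h4|exact: h5|exact: h6|]. ring.
Qed.

Lemma semi_HomLie : is_HomLie (semi_br mul Psi) (semi_Phi Psi).
Proof. split; [exact: semi_bil | exact: semi_skew | exact: semi_mult | exact: semi_jac]. Qed.


Lemma semi_WI : weakly_involutive (commbr mul) Psi ->
  weakly_involutive (semi_br mul Psi) (semi_Phi Psi).
Proof.
move=> HW x y; case: (splitv x) => u1 [x1 ->]; case: (splitv y) => u2 [x2 ->].
rewrite !(Phi_row Psi) !(semi_br_row mul Psi).
apply: pairing_eq'; intro;
  lazymatch goal with |- pairing ?t _ = _ => case: (splitv t) => t1 [t2 ->] end;
  rewrite !pairing_row /commbr; pexpW mul Psi HL H2 HW; ring.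
Qed.
End Semi.

Lemma sum_block (K : fieldType) p1 p2 k (A : 'I_k -> 'M[K]_(p1,p1)) (B : 'I_k -> 'M[K]_(p1,p2))
  (C : 'I_k -> 'M[K]_(p2,p1)) (D : 'I_k -> 'M[K]_(p2,p2)) :
  \sum_i block_mx (A i) (B i) (C i) (D i)
  = block_mx (\sum_i A i) (\sum_i B i) (\sum_i C i) (\sum_i D i).
Proof.
elim: k A B C D => [|k IH] A B C D; first by rewrite !big_ord0 block_mx0.
by rewrite !big_ord_recr /= IH add_block_mx.
Qed.

Lemma wedgeE (K : fieldType) n (a b : 'rV[K]_n) :
  wedge (inVd a) (inV b) = block_mx 0 (- (b^T *m a)) (a^T *m b) 0.
Proof.
rewrite /wedge /tens /inVd /inV !tr_row_mx !mul_col_row !trmx0 !mul0mx !mulmx0.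
by rewrite opp_block_mx add_block_mx !oppr0 !addr0 !add0r.
Qed.

Lemma trmul_sum (K : fieldType) n (A B : 'M[K]_n) :
  A^T *m B = \sum_i (row i A)^T *m row i B.
Proof.
apply/matrixP => j k; rewrite !mxE summxE; apply: eq_bigr => i _.
by rewrite !mxE big_ord1 !mxE.
Qed.

Section Basis.
Variables (K : fieldType) (n : nat) (v vd : 'I_n -> 'rV[K]_n).
Hypothesis Hd : is_dual_basis v vd.

Lemma dual_sums : \sum_i (v i)^T *m vd i = 1%:M /\ \sum_i (vd i)^T *m v i = 1%:M.
Proof.
set Mv := \matrix_i v i; set Md := \matrix_i vd i.
have h1 : Md *m Mv^T = 1%:M.
  apply/matrixP => i j; rewrite !mxE -Hd pairingE; apply: eq_bigr => k _.
  by rewrite !mxE.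
have h2 := mulmx1C h1.
have E1 : \sum_i (v i)^T *m vd i = Mv^T *m Md.
  by rewrite trmul_sum; apply: eq_bigr => i _; rewrite !rowK.
have E2 : \sum_i (vd i)^T *m v i = Md^T *m Mv.
  by rewrite trmul_sum; apply: eq_bigr => i _; rewrite !rowK.
split; first by rewrite E1.
by rewrite E2 -[Mv]trmxK -trmx_mul h2 trmx1.
Qed.

Lemma r1E : \sum_i wedge (inVd (vd i)) (inV (v i)) = block_mx 0 (- 1%:M) 1%:M 0.
Proof.
case: dual_sums => s1 s2.
under eq_bigr do rewrite wedgeE.
by rewrite sum_block !big1_eq sumrN s1 s2.
Qed.

Lemma r2E (Psi : 'M[K]_n) :
  \sum_i wedge (inVd (vd i)) (inV (v i *m Psi *m Psi))
  = block_mx 0 (- (Psi^T *m Psi^T)) (Psi *m Psi) 0.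
Proof.
case: dual_sums => s1 s2.
under eq_bigr do rewrite wedgeE.
rewrite sum_block !big1_eq sumrN.
have -> : \sum_i (v i *m Psi *m Psi)^T *m vd i = Psi^T *m Psi^T *m \sum_i (v i)^T *m vd i.
  rewrite mulmx_sumr; apply: eq_bigr => i _; by rewrite !trmx_mul !mulmxA.
have -> : \sum_i (vd i)^T *m (v i *m Psi *m Psi) = (\sum_i (vd i)^T *m v i) *m Psi *m Psi.
  rewrite !mulmx_suml; apply: eq_bigr => i _; by rewrite !mulmxA.
by rewrite s1 s2 mulmx1 mul1mx.
Qed.
End Basis.

Section Rmat.
Variables (K : fieldType) (n : nat) (Psi : 'M[K]_n).
Local Notation Phi := (semi_Phi Psi).
Local Notation r1 := (block_mx 0 (- 1%:M) 1%:M 0 : 'M[K]_(n + n)).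
Local Notation r2 := (block_mx 0 (- (Psi^T *m Psi^T)) (Psi *m Psi) 0 : 'M[K]_(n + n)).

Lemma PhiT : Phi^T = block_mx Psi^T 0 0 Psi.
Proof. by rewrite /semi_Phi tr_block_mx !trmx0 trmxK. Qed.

Lemma PhiT_row (a p : 'rV[K]_n) : row_mx a p *m Phi^T = row_mx (a *m Psi^T) (p *m Psi).
Proof. by rewrite PhiT mul_row_block !mulmx0 addr0 add0r. Qed.

Lemma R1_row (a p : 'rV[K]_n) :
  row_mx a p *m Phi^T *m r1 = row_mx (p *m Psi) (- (a *m Psi^T)).
Proof.
by rewrite PhiT_row mul_row_block !mulmx0 mulmx1 mulmxN mulmx1 add0r addr0.
Qed.

Lemma R2_row (a p : 'rV[K]_n) :
  row_mx a p *m Phi^T *m r2 = row_mx (p *m Psi *m Psi *m Psi) (- (a *m Psi^T *m Psi^T *m Psi^T)).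
Proof.
by rewrite PhiT_row mul_row_block !mulmx0 mulmxN add0r addr0 !mulmxA.
Qed.

Lemma r1_skew : r1^T = - r1.
Proof. by rewrite tr_block_mx !trmx0 linearN /= trmx1 opp_block_mx !oppr0 opprK. Qed.

Lemma r2_skew : r2^T = - r2.
Proof.
by rewrite tr_block_mx !trmx0 linearN /= !trmx_mul !trmxK opp_block_mx !oppr0 opprK.
Qed.

Lemma r1_sym : Phi^T *m r1 = r1 *m Phi.
Proof.
rewrite PhiT /semi_Phi !mulmx_block !mulmx0 !mul0mx !mulmx1 !mul1mx !mulmxN !mulNmx.
by rewrite !addr0 !add0r mulmx1 mul1mx.
Qed.

Lemma r2_r1 : r2 = r1 *m Phi *m Phi.
Proof.
rewrite /semi_Phi !mulmx_block !mulmx0 !mul0mx !mul1mx !mulNmx !mul1mx.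
by rewrite !addr0 !add0r !mul0mx ?addr0 ?add0r mulNmx.
Qed.
End Rmat.

Section Main.
Variables (K : fieldType) (n : nat) (mul : 'rV[K]_n -> 'rV[K]_n -> 'rV[K]_n)
  (Psi : 'M[K]_n).
Hypothesis HL : HomLSA mul Psi.
Hypothesis H2 : forall x y, mul x y = mul (x *m Psi *m Psi) y.
Local Notation br := (semi_br mul Psi).
Local Notation Phi := (semi_Phi Psi).
Local Notation r1 := (block_mx 0 (- 1%:M) 1%:M 0 : 'M[K]_(n + n)).
Local Notation r2 := (block_mx 0 (- (Psi^T *m Psi^T)) (Psi *m Psi) 0 : 'M[K]_(n + n)).

Lemma J1 a b c :
  pairing a (br (b *m Phi^T *m r1) (c *m Phi^T *m r1))
- pairing b (br (a *m Phi^T *m r1) (c *m Phi^T *m r1))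
+ pairing c (br (a *m Phi^T *m r1) (b *m Phi^T *m r1)) = 0.
Proof.
case: (splitv a) => al [p ->]; case: (splitv b) => be [q ->]; case: (splitv c) => ga [s ->].
rewrite !R1_row !(semi_br_row mul Psi) !pairing_row /commbr; pexp mul Psi HL H2; ring.
Qed.

Lemma J2 a b c :
  pairing a (br (b *m Phi^T *m r2) (c *m Phi^T *m r2))
- pairing b (br (a *m Phi^T *m r2) (c *m Phi^T *m r2))
+ pairing c (br (a *m Phi^T *m r2) (b *m Phi^T *m r2)) = 0.
Proof.
case: (splitv a) => al [p ->]; case: (splitv b) => be [q ->]; case: (splitv c) => ga [s ->].
rewrite !R2_row !(semi_br_row mul Psi) !pairing_row /commbr; pexp mul Psi HL H2; ring.
Qed.
End Main.

Section Dual.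
Variables (K : fieldType) (n : nat) (mul : 'rV[K]_n -> 'rV[K]_n -> 'rV[K]_n)
  (Psi : 'M[K]_n).
Hypothesis HL : HomLSA mul Psi.
Hypothesis H2 : forall x y, mul x y = mul (x *m Psi *m Psi) y.
Local Notation br := (semi_br mul Psi).
Local Notation Phi := (semi_Phi Psi).
Local Notation r1 := (block_mx 0 (- 1%:M) 1%:M 0 : 'M[K]_(n + n)).

Definition sw (x : 'rV[K]_(n + n)) : 'rV[K]_(n + n) := row_mx (rsubmx x) (lsubmx x).
Lemma sw_row (a b : 'rV[K]_n) : sw (row_mx a b) = row_mx b a.
Proof. by rewrite /sw row_mxKl row_mxKr. Qed.
Lemma sw_lin : islin sw.
Proof.
move=> c x y; case: (splitv x) => a [b ->]; case: (splitv y) => a' [b' ->].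
by rewrite scale_row_mx add_row_mx !sw_row scale_row_mx add_row_mx.
Qed.
Lemma swK x : sw (sw x) = x.
Proof. by case: (splitv x) => a [b ->]; rewrite !sw_row. Qed.
Lemma swP x : sw (x *m Phi^T) = sw x *m Phi.
Proof. by case: (splitv x) => a [b ->]; rewrite PhiT_row !sw_row (Phi_row Psi). Qed.

Lemma dual_id a b :
  dual_br (fun x => adT br Phi x r1) a b = sw (br (sw a) (sw b)).
Proof.
apply: pairing_eq => z.
rewrite (dual_pair (semi_bil HL)); last exact: r1_skew.
case: (splitv a) => al [p ->]; case: (splitv b) => be [q ->]; case: (splitv z) => u [xi ->].
rewrite !R1_row !sw_row !(semi_br_row mul Psi) ?row_mxKl ?row_mxKr !pairing_row.
rewrite [pairing (commbr _ p q) _]pairing_sym /commbr; pexp mul Psi HL H2; ring.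
Qed.
End Dual.

Unset Implicit Arguments. Set Strict Implicit. Set Printing Implicit Defensive.

Theorem corollary5p11 (K : fieldType) (n : nat)
  (mul : 'rV[K]_n -> 'rV[K]_n -> 'rV[K]_n) (Psi : 'M[K]_n)
  (v vd : 'I_n -> 'rV[K]_n) :
  HomLSA mul Psi ->
  (forall x y, mul x y = mul (x *m Psi *m Psi) y) ->
  is_basis v -> is_dual_basis v vd ->
  let br := semi_br mul Psi in
  let Phi := semi_Phi Psi in
  let r1 := \sum_i wedge (inVd (vd i)) (inV (v i)) in
  let r2 := \sum_i wedge (inVd (vd i)) (inV (v i *m Psi *m Psi)) in
  (CHYBE br Phi r1 /\ CHYBE br Phi r2) /\
  (weakly_involutive (commbr mul) Psi ->
     [/\ coboundary_bialg br Phi r1, coboundary_bialg br Phi r2 &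
         forall x, adT br Phi x r1 = adT br Phi x r2]).
Proof.
move=> HL H2 _ Hd; cbv zeta; rewrite (r1E Hd) (r2E Hd Psi).
have Hb := semi_bil HL.
split.
  split; apply: (chybe_of Hb).
  - exact: r1_skew.
  - exact: J1.
  - exact: r2_skew.
  - exact: J2.
move=> HW.
have HLie := semi_HomLie HL H2.
have HWI := semi_WI HL H2 HW.
set r1 := block_mx 0 (- 1%:M) 1%:M 0.
set r2 := block_mx 0 (- (Psi^T *m Psi^T)) (Psi *m Psi) 0.
set Phi := semi_Phi Psi.
set br := semi_br mul Psi.
have S1 : Phi^T *m r1 = r1 *m Phi by exact: r1_sym.
have R21 : r2 = r1 *m Phi *m Phi by exact: r2_r1.
have eqD x : adT br Phi x r1 = adT br Phi x r2.
  by rewrite R21; symmetry; apply: adT_twist.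
have bialg1 : HomLieBialg br Phi (fun x => adT br Phi x r1).
  have Hdual : dual_br (fun x => adT br Phi x r1) = fun a b => sw (br (sw a) (sw b)).
    by do 2 (apply: functional_extensionality => ?); apply: dual_id.
  split.
  - by split.
  - by move=> c x y; apply: adT_lin.
  - rewrite Hdual; exact: (transport_HomLie (@sw_lin _ _) (@swK _ _) (@swP _ _ Psi) HLie).
  - rewrite Hdual; exact: (transport_WI (@swP _ _ Psi) HWI).
  - exact: (cocycle Hb HLie HWI S1).
split.
- split => //; exact: phi_symE.
- split.
    apply: phi_symE; rewrite R21; exact: sym_twist.
  have -> : (fun x => adT br Phi x r2) = (fun x => adT br Phi x r1).
    by apply: functional_extensionality => x; rewrite eqD.
  exact: bialg1.
- exact: eqD.
Qed.
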